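(* Let $\mathcal C\subseteq2^{[n]}$ be a nonempty code. For all $\sigma,\tau\subseteq[n]$, $x^\sigma y^\tau\in I_{\Gamma(\mathcal C)}$ if and only if $x^\sigma(1-x)^\tau\in I_{\mathcal C}$. Consequently, $$I_{\Gamma(\mathcal C)}=\langle x^\sigma y^\tau : x^\sigma(1-x)^\tau\in CF(J_{\mathcal C})\rangle+\langle x_iy_i: i\in[n]\rangle.$$
   Context: Let $R=\mathbb F_2[x_1,\dots,x_n]$ and $S=\mathbb F_2[x_1,\dots,x_n,y_1,\dots,y_n]$. For $\sigma,\tau\subseteq[n]$ write $x^\sigma=\prod_{i\in\sigma}x_i$, $y^\tau=\prod_{j\in\tau}y_j$, $(1-x)^\tau=\prod_{j\in\tau}(1-x_j)$; polynomials $x^\sigma(1-x)^\tau$ are pseudo-monomials. A polynomial $f\in R$ is evaluated at $\sigma\subseteq[n]$ by setting $x_i=1$ for $i\in\sigma$ and $x_i=0$ otherwise. $I_{\mathcal C}=\{f\in R: f(\sigma)=0\ \forall\sigma\in\mathcal C\}$; the neural ideal is $J_{\mathcal C}=\langle x^\sigma(1-x)^{[n]\setminus\sigma}:\sigma\notin\mathcal C\rangle$; the canonical form $CF(J_{\mathcal C})$ is the set of pseudo-monomials $f\in J_{\mathcal C}$ such that no other pseudo-monomial in $J_{\mathcal C}$ divides $f$. The polar complex $\Gamma(\mathcal C)$ is the simplicial complex on $[n]\sqcup\{\bar1,\dots,\bar n\}$ of all subsets of $\sigma\sqcup\{\bar i:i\notin\sigma\}$, $\sigma\in\mathcal C$;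 its Stanley–Reisner ideal (identifying vertex $i$ with $x_i$ and $\bar i$ with $y_i$) is $I_{\Gamma(\mathcal C)}=\langle x^\sigma y^\tau:\sigma\sqcup\{\bar j:j\in\tau\}\notin\Gamma(\mathcal C)\rangle\subseteq S$. *)

(* Defs.v *)
From HB Require Import structures.
From mathcomp Require Import all_boot all_order all_algebra.
From mathcomp Require Import mpoly.
Set Implicit Arguments. Unset Strict Implicit. Unset Printing Implicit Defensive.
Import GRing.Theory.
Local Open Scope ring_scope.

(* R = F_2[x_1..x_n] ; S = F_2[x_1..x_n,y_1..y_n], where x_i = 'X_(lshift n i)
   and y_i = 'X_(rshift n i) in the polynomial ring with n + n variables. *)
Notation Rpoly n := {mpoly 'F_2[n]}.
Notation Spoly n := {mpoly 'F_2[n + n]}.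

Definition ideal_gen (T : comPzRingType) (G : T -> Prop) (f : T) : Prop :=
  exists s : seq (T * T), (forall p, p \in s -> G p.2) /\
                          f = \sum_(p <- s) p.1 * p.2.

Definition ideal_sum (T : comPzRingType) (I J : T -> Prop) (f : T) : Prop :=
  exists a b, I a /\ J b /\ f = a + b.

Definition rdvd (T : comPzRingType) (g f : T) : Prop := exists h, f = g * h.

Definition xmonR n (s : {set 'I_n}) : Rpoly n := \prod_(i in s) 'X_i.
Definition omxR n (t : {set 'I_n}) : Rpoly n := \prod_(j in t) (1 - 'X_j).
Definition pmR n (s t : {set 'I_n}) : Rpoly n := xmonR s * omxR t.

Definition xmonS n (s : {set 'I_n}) : Spoly n := \prod_(i in s) 'X_(lshift n i).
Definition ymonS n (t : {set 'I_n}) : Spoly n := \prod_(j in t) 'X_(rshift n j).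

Definition pseudo_monomial n (f : Rpoly n) : Prop :=
  exists s t : {set 'I_n}, [disjoint s & t] /\ f = pmR s t.

Definition eval_at n (f : Rpoly n) (s : {set 'I_n}) : 'F_2 :=
  f.@[fun i => (i \in s)%:R].

Definition I_code n (C : {set {set 'I_n}}) (f : Rpoly n) : Prop :=
  forall s, s \in C -> eval_at f s = 0.

Definition J_code n (C : {set {set 'I_n}}) : Rpoly n -> Prop :=
  ideal_gen (fun g => exists s : {set 'I_n}, s \notin C /\ g = pmR s (~: s)).

Definition CF n (J : Rpoly n -> Prop) (f : Rpoly n) : Prop :=
  pseudo_monomial f /\ J f /\
  forall g, pseudo_monomial g -> J g -> g <> f -> ~ rdvd g f.

(* polar complex on vertex set [n] ⊔ {1bar..nbar} = 'I_n + 'I_n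
   (inl i = vertex i, inr i = vertex ibar) *)
Definition polar_facet n (c : {set 'I_n}) : {set 'I_n + 'I_n} :=
  [set inl i | i in c] :|: [set inr i | i in ~: c].
Definition polar_complex n (C : {set {set 'I_n}}) : {set {set 'I_n + 'I_n}} :=
  [set F : {set 'I_n + 'I_n} | [exists c in C, F \subset polar_facet c]].

(* monomial of a vertex set: vertex inl i |-> x_i, inr i |-> y_i *)
Definition vmonS n (F : {set 'I_n + 'I_n}) : Spoly n :=
  \prod_(v in F) 'X_(unsplit v).

Definition SR_ideal n (D : {set {set 'I_n + 'I_n}}) : Spoly n -> Prop :=
  ideal_gen (fun g => exists F, F \notin D /\ g = vmonS F).

(* Main.v *)
Require Import Defs.
From HB Require Import structures.
From mathcomp Require Import all_boot all_order all_algebra.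
From mathcomp Require Import mpoly.
From mathcomp Require Import ring.
Import GRing.Theory.
Local Open Scope ring_scope.

Section Ideals.
Variable T : comPzRingType.
Implicit Types G H : T -> Prop.

Lemma ig0 G : ideal_gen G 0.
Proof. by exists [::]; split=> //; rewrite big_nil. Qed.

Lemma ig_gen G g : G g -> ideal_gen G g.
Proof.
move=> Gg; exists [:: (1, g)]; split; first by move=> p; rewrite inE => /eqP ->.
by rewrite big_seq1 mul1r.
Qed.

Lemma igD G a b : ideal_gen G a -> ideal_gen G b -> ideal_gen G (a + b).
Proof.
move=> [s [Hs ->]] [t [Ht ->]]; exists (s ++ t); split; last by rewrite big_cat.
by move=> p; rewrite mem_cat => /orP [/Hs|/Ht].
Qed.

Lemma igM G c a : ideal_gen G a -> ideal_gen G (c * a).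
Proof.
move=> [s [Hs ->]]; exists [seq (c * p.1, p.2) | p <- s]; split.
  by move=> p /mapP [q /Hs Hq ->].
by rewrite big_map mulr_sumr; apply: eq_bigr => p _; rewrite mulrA.
Qed.

Lemma ig_mono G H f : (forall g, G g -> ideal_gen H g) -> ideal_gen G f -> ideal_gen H f.
Proof.
move=> GH [s [Hs ->]]; elim: s Hs => [|p s IH] Hs; first by rewrite big_nil; apply: ig0.
rewrite big_cons; apply: igD; last by apply: IH => q Hq; apply: Hs; rewrite inE Hq orbT.
by apply: igM; apply: GH; apply: Hs; rewrite inE eqxx.
Qed.

End Ideals.

Lemma ig_vanish k (G : {mpoly 'F_2[k]} -> Prop) (v : 'I_k -> 'F_2) f :
  (forall g, G g -> g.@[v] = 0) -> ideal_gen G f -> f.@[v] = 0.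
Proof.
move=> Gv [s [Hs ->]]; rewrite rmorph_sum /= big_seq big1 // => p Hp.
by rewrite mevalM (Gv p.2) ?mulr0 //; apply: Hs.
Qed.

Lemma prod_bool (I : finType) (A : {pred I}) (P : pred I) :
  \prod_(i in A) ((P i)%:R : 'F_2) = [forall (i | i \in A), P i]%:R.
Proof.
case: forallP => H; first by rewrite big1 // => i Ai; rewrite (implyP (H i) Ai).
have [i /andP [Ai Pi]] : exists i, (i \in A) && ~~ P i.
  apply/existsP; apply/negP => /existsP Hn; apply: H => i; apply/implyP => Ai.
  by apply/negPn/negP => nP; apply: Hn; exists i; rewrite Ai.
by rewrite (bigD1 i) //= (negbTE Pi) mul0r.
Qed.

Lemma forall_sub (T : finType) (A B : {set T}) :
  [forall (i | i \in A), i \in B] = (A \subset B).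
Proof. by apply/forall_inP/subsetP. Qed.

Lemma forall_disj (T : finType) (A B : {set T}) :
  [forall (i | i \in A), i \notin B] = [disjoint A & B].
Proof. by rewrite disjoint_subset; apply/forall_inP/subsetP => H x /H; rewrite ?inE. Qed.

Lemma subnat_bool (b : bool) : 1 - (b%:R : 'F_2) = (~~ b)%:R.
Proof. by case: b; rewrite ?subrr ?subr0. Qed.

Lemma eval_pmR n (s t c : {set 'I_n}) :
  eval_at (pmR s t) c = ((s \subset c) && [disjoint t & c])%:R.
Proof.
rewrite /eval_at /pmR mevalM /xmonR /omxR !rmorph_prod /=.
under eq_bigr do rewrite mevalXU.
under [X in _ * X]eq_bigr => j _ do rewrite mevalB meval1 mevalXU subnat_bool.
by rewrite !prod_bool forall_sub forall_disj -natrM mulnb.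
Qed.

Definition pc {n} (c : {set 'I_n}) : 'I_(n + n) -> 'F_2 :=
  fun k => (split k \in polar_facet c)%:R.

Lemma eval_vmon n (G : {set 'I_n + 'I_n}) c :
  (vmonS G).@[pc c] = (G \subset polar_facet c)%:R.
Proof.
rewrite /vmonS rmorph_prod /=.
under eq_bigr do rewrite mevalXU /pc unsplitK.
by rewrite prod_bool forall_sub.
Qed.

Lemma inl_inj (A B : Type) : injective (@inl A B). Proof. by move=> x y []. Qed.
Lemma inr_inj (A B : Type) : injective (@inr A B). Proof. by move=> x y []. Qed.

Lemma mem_inl_l n (s : {set 'I_n}) i : (inl i \in (@inl _ 'I_n) @: s) = (i \in s).
Proof. exact: mem_imset (@inl_inj _ _). Qed.
Lemma mem_inr_r n (s : {set 'I_n}) i : (inr i \in (@inr 'I_n _) @: s) = (i \in s).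
Proof. exact: mem_imset (@inr_inj _ _). Qed.
Lemma mem_inr_l n (s : {set 'I_n}) i : (inr i \in (@inl _ 'I_n) @: s) = false.
Proof. by apply/imsetP => -[]. Qed.
Lemma mem_inl_r n (s : {set 'I_n}) i : (inl i \in (@inr 'I_n _) @: s) = false.
Proof. by apply/imsetP => -[]. Qed.

Definition Fst {n} (s t : {set 'I_n}) : {set 'I_n + 'I_n} := inl @: s :|: inr @: t.

Lemma mem_Fst n (s t : {set 'I_n}) v :
  v \in Fst s t = (match v with inl i => i \in s | inr i => i \in t end).
Proof. by rewrite inE; case: v => i; rewrite ?mem_inl_l ?mem_inr_l ?mem_inl_r ?mem_inr_r ?orbF. Qed.

Lemma mem_pf n (c : {set 'I_n}) v :
  v \in polar_facet c = (match v with inl i => i \in c | inr i => i \notin c end).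
Proof. by rewrite inE; case: v => i; rewrite ?mem_inl_l ?mem_inr_l ?mem_inl_r ?mem_inr_r ?orbF ?inE. Qed.

Lemma Fst_sub n (s t c : {set 'I_n}) :
  (Fst s t \subset polar_facet c) = (s \subset c) && [disjoint t & c].
Proof.
rewrite -forall_sub -forall_disj -!forall_sub.
apply/forallP/andP => [H|[H1 H2] v].
  split; apply/forallP => i.
    by have := H (inl i); rewrite mem_Fst mem_pf.
  by have := H (inr i); rewrite mem_Fst mem_pf.
by case: v => i; rewrite mem_Fst mem_pf; [apply: (forallP H1)|apply: (forallP H2)].
Qed.

Lemma xy_vmon n (s t : {set 'I_n}) : xmonS s * ymonS t = vmonS (Fst s t).
Proof.
rewrite /vmonS /Fst.
rewrite (eq_bigl [predU (inl @: s) & (inr @: t)]); last by move=> v; rewrite !inE.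
rewrite bigU; last first.
  rewrite -setI_eq0; apply/eqP/setP => v; rewrite !inE.
  by case: v => i; rewrite ?mem_inl_l ?mem_inr_l ?mem_inl_r ?mem_inr_r ?andbF.
by rewrite !big_imset //= => x y _ _ [].
Qed.

Lemma natb_eq0 (b : bool) : ((b%:R : 'F_2) == 0) = ~~ b.
Proof. by case: b; rewrite ?oner_eq0 ?eqxx. Qed.

Lemma Ibool n (C : {set {set 'I_n}}) s t :
  I_code C (pmR s t) <-> [forall c in C, ~~ ((s \subset c) && [disjoint t & c])].
Proof.
split=> [H|/forall_inP H c Cc].
  by apply/forall_inP => c Cc; rewrite -natb_eq0 -eval_pmR (H c Cc).
by apply/eqP; rewrite eval_pmR natb_eq0 H.
Qed.

Lemma part1 n (C : {set {set 'I_n}}) s t :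
  SR_ideal (polar_complex C) (xmonS s * ymonS t) <-> I_code C (pmR s t).
Proof.
split=> [H c Cc|H].
  apply/eqP; rewrite eval_pmR natb_eq0; apply/negP => E.
  suff: (xmonS s * ymonS t).@[pc c] = 0.
    by rewrite xy_vmon eval_vmon Fst_sub E => /eqP; rewrite natb_eq0.
  apply: (@ig_vanish _ _ (pc c) _ _ H).
  move=> g [F [nF ->]]; apply/eqP; rewrite eval_vmon natb_eq0; apply/negP => sub.
  by move/negP: nF; apply; rewrite inE; apply/existsP; exists c; rewrite Cc.
rewrite xy_vmon; apply: ig_gen; exists (Fst s t); split=> //.
apply/negP; rewrite inE => /existsP [c /andP [Cc sub]].
by move: (H c Cc) => /eqP; rewrite eval_pmR natb_eq0 -Fst_sub sub.
Qed.

Lemma J_I n (C : {set {set 'I_n}}) f : J_code C f -> I_code C f.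
Proof.
move=> Jf c Cc; apply: (@ig_vanish _ _ (fun i => (i \in c)%:R) _ _ Jf) => g [s [nC ->]].
apply/eqP; rewrite -/(eval_at _ c) eval_pmR natb_eq0; apply/negP => /andP [sc dc].
have sc' : s = c.
  apply/eqP; rewrite eqEsubset sc /=; apply/subsetP => i ic.
  apply/negPn/negP => ns; move: dc; rewrite -forall_disj => /forall_inP /(_ i).
  by rewrite inE ns ic => /(_ isT).
by move: nC; rewrite sc' Cc.
Qed.

Lemma I_mono n (C : {set {set 'I_n}}) (s t s' t' : {set 'I_n}) :
  s \subset s' -> t \subset t' -> I_code C (pmR s t) -> I_code C (pmR s' t').
Proof.
move=> ss tt /Ibool /forall_inP H; apply/Ibool/forall_inP => c Cc.
apply/negP => /andP [s'c dc]; move/negP: (H c Cc); apply.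
by rewrite (subset_trans ss s'c) (disjointWl tt dc).
Qed.

Lemma pm_split n (s t : {set 'I_n}) i : i \notin s -> i \notin t ->
  pmR s t = pmR (i |: s) t + pmR s (i |: t).
Proof.
move=> ns nt; rewrite /pmR /xmonR /omxR big_setU1 //= big_setU1 //=.
set A := \prod_(i0 in s) _; set B := \prod_(j in t) _.
ring.
Qed.

Lemma I_J_base n (C : {set {set 'I_n}}) s t :
  s :|: t = setT -> [disjoint s & t] -> I_code C (pmR s t) -> J_code C (pmR s t).
Proof.
move=> st dst H.
have -> : t = ~: s.
  apply/setP => i; rewrite inE; case si: (i \in s).
    by move: dst; rewrite -forall_disj => /forall_inP /(_ i si) /negbTE.
  by have := in_setT i; rewrite -st inE si.
apply: ig_gen; exists s; split=> //; apply/negP => Cs.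
move: (H s Cs) => /eqP; rewrite eval_pmR natb_eq0 subxx /=.
rewrite -forall_disj => /negP; apply; apply/forall_inP => i.
move=> it; apply/negP => si; move: dst; rewrite -forall_disj.
by move=> /forall_inP /(_ i si); rewrite it.
Qed.

Lemma setC0T n (X : {set 'I_n}) : ~: X = set0 -> X = setT.
Proof. by rewrite -setCT => /setC_inj. Qed.

Lemma I_J_aux n (C : {set {set 'I_n}}) (k : nat) : forall s t : {set 'I_n},
  (#|~: (s :|: t)| <= k)%N -> [disjoint s & t] -> I_code C (pmR s t) -> J_code C (pmR s t).
Proof.
elim: k => [|k IH] s t.
  by rewrite leqn0 cards_eq0 => /eqP/setC0T; exact: I_J_base.
case: (set_0Vmem (~: (s :|: t))) => [/setC0T st _|[i]].
  exact: I_J_base.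
rewrite !inE negb_or => /andP [ns nt] card dst H.
have cardD : #|~: (s :|: t)| = #|~: (s :|: t) :\ i|.+1.
  by rewrite (cardsD1 i) !inE negb_or ns nt.
have E1 : ~: ((i |: s) :|: t) = ~: (s :|: t) :\ i.
  by apply/setP => j; rewrite !inE !negb_or andbA.
have E2 : ~: (s :|: (i |: t)) = ~: (s :|: t) :\ i.
  apply/setP => j; rewrite !inE !negb_or.
  by case: (j == i); case: (j \in s); case: (j \in t).
rewrite (@pm_split _ _ _ _ ns nt); apply: igD; apply: IH.
- by rewrite E1 -ltnS -cardD.
- rewrite -forall_disj; apply/forall_inP => j; rewrite !inE => /orP [/eqP ->//|js].
  by move: dst; rewrite -forall_disj => /forall_inP; apply.
- by apply: I_mono H => //; apply: subsetUr.
- by rewrite E2 -ltnS -cardD.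
- rewrite -forall_disj; apply/forall_inP => j js; rewrite !inE negb_or.
  move: dst; rewrite -forall_disj => /forall_inP /(_ j js) ->; rewrite andbT.
  by apply/negP => /eqP ji; move: ns; rewrite -ji js.
- by apply: I_mono H => //; apply: subsetUr.
Qed.

Lemma I_J n (C : {set {set 'I_n}}) (s t : {set 'I_n}) :
  [disjoint s & t] -> I_code C (pmR s t) -> J_code C (pmR s t).
Proof. exact: (@I_J_aux n C #|~: (s :|: t)|). Qed.

Lemma eval_atM n (f g : Rpoly n) c : eval_at (f * g) c = eval_at f c * eval_at g c.
Proof. exact: mevalM. Qed.

Lemma disjP' n (A B : {set 'I_n}) :
  reflect (forall i, i \in A -> i \notin B) [disjoint A & B].
Proof. rewrite -forall_disj; exact: forall_inP. Qed.

Lemma dvd_sub n (a b s t : {set 'I_n}) h :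
  [disjoint t & s] -> pmR s t = pmR a b * h -> a \subset s /\ b \subset t.
Proof.
move=> dts Hh; split; apply/subsetP => i ai; apply/negPn/negP => ni.
  have := congr1 (fun p => eval_at p s) Hh; rewrite /= eval_atM !eval_pmR subxx dts.
  have -> : (a \subset s) = false.
    by apply/negbTE/negP => /subsetP /(_ i ai); apply/negP.
  by rewrite mul0r => /eqP; rewrite natb_eq0.
have := congr1 (fun p => eval_at p (i |: s)) Hh; rewrite /= eval_atM !eval_pmR subsetUr.
have -> : [disjoint t & i |: s].
  apply/disjP' => j jt; rewrite !inE negb_or (disjP' _ _ _ dts j jt) andbT.
  by apply/negP => /eqP ji; move: ni; rewrite -ji jt.
have -> : [disjoint b & i |: s] = false.
  by apply/negbTE/negP => /disjP' /(_ i ai); rewrite !inE eqxx.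
by rewrite andbF mul0r => /eqP; rewrite natb_eq0.
Qed.

Lemma CF_exists n (C : {set {set 'I_n}}) (s t : {set 'I_n}) :
  [disjoint s & t] -> I_code C (pmR s t) ->
  exists s' t' : {set 'I_n}, s' \subset s /\ t' \subset t /\ CF (J_code C) (pmR s' t').
Proof.
move=> dst Ist.
pose P := fun p : {set 'I_n} * {set 'I_n} =>
  [&& p.1 \subset s, p.2 \subset t &
      [forall c in C, ~~ ((p.1 \subset c) && [disjoint p.2 & c])]].
have P0 : P (s, t) by rewrite /P /= !subxx; apply/Ibool.
case: (arg_minnP (fun p : {set 'I_n} * {set 'I_n} => #|p.1| + #|p.2|)%N P0) => [[s' t']] /and3P [/= ss tt Ib] Hmin.
have dst' : [disjoint s' & t'].
  by apply: (disjointWl ss); apply: (disjointWr tt).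
exists s', t'; split=> //; split=> //; split.
  by exists s', t'.
split; first by apply: I_J => //; apply/Ibool.
move=> g [a [b [dab ->]]] Jg neq [h Hh].
have [sa sb] := @dvd_sub _ a b s' t' h ltac:(by rewrite disjoint_sym) Hh.
have Pab : P (a, b).
  rewrite /P /= (subset_trans sa ss) (subset_trans sb tt) /=.
  by apply/Ibool; apply: J_I.
have := Hmin (a, b) Pab; rewrite /=.
have := subset_leqif_cards sa; have := subset_leqif_cards sb.
move=> [lb eb] [la ea] le.
have /eqP ea' : #|a| == #|s'|.
  by rewrite eqn_leq la /= -(leq_add2r #|t'|); apply: (leq_trans le); rewrite leq_add2l lb.
have /eqP eb' : #|b| == #|t'|.
  by rewrite eqn_leq lb /= -(leq_add2l #|s'|); apply: (leq_trans le); rewrite leq_add2r la.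
have E1 : a = s' by apply/eqP; rewrite -ea ea'.
have E2 : b = t' by apply/eqP; rewrite -eb eb'.
by apply: neq; rewrite E1 E2.
Qed.

Lemma igsum (T : comPzRingType) (G G1 G2 : T -> Prop) f :
  (forall g, G g -> ideal_sum (ideal_gen G1) (ideal_gen G2) g) ->
  ideal_gen G f -> ideal_sum (ideal_gen G1) (ideal_gen G2) f.
Proof.
move=> GH [s [Hs ->]]; elim: s Hs => [|p s IH] Hs.
  by exists 0, 0; rewrite big_nil addr0; split; [apply: ig0|split; [apply: ig0|]].
have [a [b [Ha [Hb Eab]]]] := GH _ (Hs p (mem_head _ _)).
have [|a' [b' [Ha' [Hb' Eab']]]] := IH.
  by move=> q Hq; apply: Hs; rewrite inE Hq orbT.
exists (p.1 * a + a'), (p.1 * b + b'); split; first by apply: igD => //; apply: igM.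
split; first by apply: igD => //; apply: igM.
rewrite big_cons Eab' Eab; ring.
Qed.

Lemma Fst_eta n (F : {set 'I_n + 'I_n}) :
  F = Fst [set i | inl i \in F] [set i | inr i \in F].
Proof. by apply/setP => v; rewrite mem_Fst; case: v => i; rewrite inE. Qed.

Lemma split_mon n (s s' t t' : {set 'I_n}) : s' \subset s -> t' \subset t ->
  xmonS s * ymonS t = (xmonS (s :\: s') * ymonS (t :\: t')) * (xmonS s' * ymonS t').
Proof.
move=> ss tt; rewrite /xmonS /ymonS (big_setID (A:=s) s') (big_setID (A:=t) t').
rewrite (setIidPr ss) (setIidPr tt) /=; ring.
Qed.

Theorem lemma6p7 (n : nat) (C : {set {set 'I_n}}) :
  C != set0 ->
  (forall s t : {set 'I_n},
      SR_ideal (polar_complex C) (xmonS s * ymonS t) <-> I_code C (pmR s t)) /\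
  (forall f : Spoly n,
      SR_ideal (polar_complex C) f <->
      ideal_sum
        (ideal_gen (fun g => exists s t : {set 'I_n},
                        CF (J_code C) (pmR s t) /\ g = xmonS s * ymonS t))
        (ideal_gen (fun g => exists i : 'I_n,
                        g = 'X_(lshift n i) * 'X_(rshift n i)))
        f).
Proof.
move=> _; split; first by move=> s t; apply: part1.
move=> f; split.
  move=> Hf; apply: (@igsum _ _ _ _ _ _ Hf) => g [F [nF ->]].
  rewrite (@Fst_eta _ F) -xy_vmon.
  set s := [set i | inl i \in F]; set t := [set i | inr i \in F].
  have SR : SR_ideal (polar_complex C) (xmonS s * ymonS t).
    by rewrite xy_vmon -Fst_eta; apply: ig_gen; exists F.
  case dst: [disjoint s & t].
    have [s' [t' [ss [tt cf]]]] := @CF_exists _ _ _ _ dst ((part1 _ _ _ _).1 SR).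
    exists (xmonS s * ymonS t), 0; split; last by split; [apply: ig0|rewrite addr0].
    by rewrite (@split_mon _ _ _ _ _ ss tt); apply: igM; apply: ig_gen; exists s', t'.
  have [i] : exists i, i \in s :&: t by apply/set0Pn; rewrite setI_eq0 dst.
  rewrite inE => /andP [si ti].
  exists 0, (xmonS s * ymonS t); split; first by apply: ig0.
  split; last by rewrite add0r.
  rewrite /xmonS /ymonS (big_setD1 _ si) (big_setD1 _ ti) /=.
  have -> : forall a b c d : Spoly n, (a * b) * (c * d) = (b * d) * (a * c).
    by move=> a b c d; ring.
  by apply: igM; apply: ig_gen; exists i.
move=> [a [b [Ha [Hb ->]]]]; apply: igD.
  apply: ig_mono Ha => g [s [t [cf ->]]].
  by apply/part1; apply: J_I; exact: cf.2.1.
apply: ig_mono Hb => g [i ->].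
have -> : 'X_(lshift n i) * 'X_(rshift n i) = xmonS [set i] * ymonS [set i] :> Spoly n.
  by rewrite /xmonS /ymonS !big_set1.
apply/part1 => c Cc; apply/eqP; rewrite eval_pmR natb_eq0; apply/negP.
move=> /andP [/subsetP H1 /disjP' H2].
by have := H2 i (set11 i); rewrite H1 ?set11.
Qed.
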